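(* Let $\Sigma^*\to G$, $w\mapsto\overline w$, be a choice of generators for a group $G$, let $\#\notin\Sigma$, let $R\subset\Sigma^*$ be a regular combing, and suppose $M=\{u\#v\#w\mid u,v,w\in R,\ \overline u\,\overline v\,\overline w=1\}$ is context-free. Let $\mathcal G$ be a context-free grammar for $M$ in Chomsky normal form (all productions of the form $A\to BC$ or $A\to a$ with $A,B,C$ nonterminals and $a\in\Sigma\cup\{\#\}$) such that every production participates in some derivation of a word of $M$ and every nonterminal occurs in some production. Call a nonterminal $A$ of rank zero if no terminal word derivable from $A$ contains $\#$. Then there exist a constant $K'$ and a regular combing $R'\subset R$ such that every word of $M\cap (R'\#R'\#R')$ has a derivation in $\mathcal G$ in which each nonterminal of rank zero derives a subword of length at most $K'$.
   Context: A choice of generators for $G$ consists of a finite alphabet $\Sigma$ with formal inverses (a fixed-point-free involution $a\mapsto a^{-1}$ on $\Sigma$, extended by $(wv)^{-1}=v^{-1}w^{-1}$) and a surjective monoid homomorphism $\Sigma^*\to G$, $w\mapsto\overline w$, with $\overline{w^{-1}}=\overline w^{-1}$. A regular combing is a regular language $R\subset\Sigma^*$ mapping onto $G$. In a derivation of a terminal word, each occurrence of a nonterminal derives a subword of that word. *)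

(* Defs.v *)
From mathcomp Require Import all_boot.
Set Implicit Arguments.
Unset Strict Implicit.
Unset Printing Implicit Defensive.

Record group_str (G : Type) := GroupStr {
  gmul : G -> G -> G;
  gone : G;
  ginv : G -> G;
  gmulA : forall x y z, gmul x (gmul y z) = gmul (gmul x y) z;
  gmul1l : forall x, gmul gone x = x;
  gmul1r : forall x, gmul x gone = x;
  gmulVl : forall x, gmul (ginv x) x = gone;
  gmulVr : forall x, gmul x (ginv x) = gone
}.

Definition word_inv (S : Type) (sinv : S -> S) (w : seq S) : seq S :=
  rev (map sinv w).

Definition choice_of_generators (G : Type) (gs : group_str G) (Sigma : finType)
  (sinv : Sigma -> Sigma) (phi : seq Sigma -> G) : Prop :=
  [/\ involutive sinv /\ (forall a, sinv a <> a),
      phi [::] = gone gs,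
      (forall w v, phi (w ++ v) = gmul gs (phi w) (phi v)),
      (forall g, exists w, phi w = g) &
      (forall w, phi (word_inv sinv w) = ginv gs (phi w))].

Record dfa (A : finType) := DFA {
  dstate : finType;
  dstart : dstate;
  dfinal : pred dstate;
  dtrans : dstate -> A -> dstate
}.

Arguments dfinal {A} d _.
Arguments dstart {A} d.
Arguments dtrans {A} d _ _.

Definition dfa_accepts (A : finType) (D : dfa A) (w : seq A) : bool :=
  dfinal D (foldl (dtrans D) (dstart D) w).

Definition regular (A : finType) (L : seq A -> Prop) : Prop :=
  exists D : dfa A, forall w, L w <-> dfa_accepts D w.

Definition regular_combing (G : Type) (Sigma : finType) (phi : seq Sigma -> G)
  (R : seq Sigma -> Prop) : Prop :=
  regular R /\ forall g, exists w, R w /\ phi w = g.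

(* Words over Sigma u {#}: [None] plays the role of the letter #. *)
Definition sharp3 (Sigma : Type) (u v w : seq Sigma) : seq (option Sigma) :=
  map Some u ++ None :: map Some v ++ None :: map Some w.

Definition Mlang (G : Type) (gs : group_str G) (Sigma : Type)
  (phi : seq Sigma -> G) (R : seq Sigma -> Prop) (x : seq (option Sigma)) : Prop :=
  exists u v w, [/\ x = sharp3 u v w, R u, R v, R w &
                   gmul gs (gmul gs (phi u) (phi v)) (phi w) = gone gs].

Definition concat3 (Sigma : Type) (R : seq Sigma -> Prop) (x : seq (option Sigma)) : Prop :=
  exists u v w, [/\ x = sharp3 u v w, R u, R v & R w].

Record cnf_grammar (T : Type) := CNFGrammar {
  nonterm : finType;
  gstart : nonterm;
  binrule : nonterm -> nonterm -> nonterm -> bool;   (* A -> B C *)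
  termrule : nonterm -> T -> bool                     (* A -> a *)
}.

Arguments binrule {T} c _ _ _.
Arguments termrule {T} c _ _.
Arguments gstart {T} c.

Inductive ptree (N T : Type) : Type :=
  | PLeaf (A : N) (a : T)
  | PNode (A : N) (l r : ptree N T).
Arguments PLeaf {N T}.
Arguments PNode {N T}.

Definition proot (N T : Type) (t : ptree N T) : N :=
  match t with PLeaf A _ => A | PNode A _ _ => A end.

Fixpoint pyield (N T : Type) (t : ptree N T) : seq T :=
  match t with PLeaf _ a => [:: a] | PNode _ l r => pyield l ++ pyield r end.

Fixpoint pvalid {T : Type} (g : cnf_grammar T) (t : ptree (nonterm g) T) : bool :=
  match t with
  | PLeaf A a => termrule g A a
  | PNode A l r => [&& binrule g A (proot l) (proot r), @pvalid T g l & @pvalid T g r]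
  end.

Arguments pvalid {T} g t.

Definition derives {T : Type} (g : cnf_grammar T) (A : nonterm g)
  (t : ptree (nonterm g) T) (x : seq T) : Prop :=
  [/\ pvalid g t, proot t = A & pyield t = x].

Arguments derives {T} g A t x.

Fixpoint all_nodes (N T : Type) (P : ptree N T -> Prop) (t : ptree N T) : Prop :=
  P t /\ match t with PLeaf _ _ => True | PNode _ l r => all_nodes P l /\ all_nodes P r end.

Fixpoint some_node (N T : Type) (P : ptree N T -> Prop) (t : ptree N T) : Prop :=
  P t \/ match t with PLeaf _ _ => False | PNode _ l r => some_node P l \/ some_node P r end.

Inductive production (N T : Type) :=
  | BinProd (A B C : N)
  | TermProd (A : N) (a : T).
Arguments BinProd {N T}.
Arguments TermProd {N T}.

Definition root_prod (N T : Type) (t : ptree N T) : production N T :=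
  match t with
  | PLeaf A a => TermProd A a
  | PNode A l r => BinProd A (proot l) (proot r)
  end.

Definition is_production {T : Type} (g : cnf_grammar T) (p : production (nonterm g) T) : bool :=
  match p with BinProd A B C => binrule g A B C | TermProd A a => termrule g A a end.

Arguments is_production {T} g p.

Definition generates (T : Type) (g : cnf_grammar T) (L : seq T -> Prop) : Prop :=
  forall x, L x <-> exists t, derives g (gstart g) t x.

Definition productions_useful (T : Type) (g : cnf_grammar T) (L : seq T -> Prop) : Prop :=
  forall p, is_production g p ->
    exists t x, [/\ derives g (gstart g) t x, L x & some_node (fun s => root_prod s = p) t].

Definition nonterminals_occur (T : Type) (g : cnf_grammar T) : Prop :=
  forall X : nonterm g,
    (exists A B C, binrule g A B C /\ (X = A \/ X = B \/ X = C)) \/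
    (exists a, termrule g X a).

Definition rank_zero (Sigma : eqType) (g : cnf_grammar (option Sigma)) (A : nonterm g) : Prop :=
  forall t x, derives g A t x -> None \notin x.

(* Main.v *)
Require Import Defs.
From mathcomp Require Import all_boot.
From mathcomp Require Import zify.
From Stdlib Require Import ClassicalEpsilon Classical.
Set Implicit Arguments.
Unset Strict Implicit.
Unset Printing Implicit Defensive.

Fixpoint subtree (N T : Type) (s t : ptree N T) : Prop :=
  s = t \/ match t with PLeaf _ _ => False | PNode _ l r => subtree s l \/ subtree s r end.

Definition psub (N T : Type) (s t : ptree N T) : Prop :=
  match t with PLeaf _ _ => False | PNode _ l r => subtree s l \/ subtree s r end.

Lemma subtree_refl N T (t : ptree N T) : subtree t t.
Proof. by case: t => *; left. Qed.

Lemma subtree_trans N T (s t u : ptree N T) : subtree s t -> subtree t u -> subtree s u.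
Proof.
move=> Hst; elim: u => [A a|A l IHl r IHr].
  by case=> [<-|[]].
case=> [<-|[/IHl|/IHr]] // H; rewrite /=; right; [left|right]; exact: H.
Qed.

Lemma psub_subtree N T (s t : ptree N T) : psub s t -> subtree s t.
Proof. by case: t => //= A l r H; right. Qed.

Lemma subtree_factor N T (s t : ptree N T) : subtree s t ->
  exists pre suf, pyield t = pre ++ pyield s ++ suf.
Proof.
elim: t => [A a|A l IHl r IHr] /=.
  by case=> // ->; exists [::], [::]; rewrite cats0.
case=> [->|[/IHl|/IHr]] /=; first by exists [::], [::]; rewrite cats0.
  by case=> pre [suf ->]; exists pre, (suf ++ pyield r); rewrite !catA.
by case=> pre [suf ->]; exists (pyield l ++ pre), suf; rewrite !catA.
Qed.

Lemma size_yield_pos N T (t : ptree N T) : 0 < size (pyield t).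
Proof. by elim: t => //= A l IHl r IHr; rewrite size_cat addn_gt0 IHl. Qed.

Lemma psub_size N T (s t : ptree N T) : psub s t -> size (pyield s) < size (pyield t).
Proof.
case: t => //= A l r [] /subtree_factor [pre [suf E]]; rewrite size_cat E !size_cat.
  by have := size_yield_pos r; lia.
by have := size_yield_pos l; lia.
Qed.

Lemma subtree_valid T (g : cnf_grammar T) s t : subtree s t -> pvalid g t -> pvalid g s.
Proof.
elim: t => [A a|A l IHl r IHr] /=; first by case=> // ->.
case=> [->|[/IHl|/IHr]] //= H /and3P[? ? ?]; [exact: H | exact: H].
Qed.

Lemma ctx T (g : cnf_grammar T) s t : subtree s t -> pvalid g t ->
  exists pre suf, pyield t = pre ++ pyield s ++ suf /\
   forall s', pvalid g s' -> proot s' = proot s ->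
     exists t', [/\ pvalid g t', proot t' = proot t & pyield t' = pre ++ pyield s' ++ suf].
Proof.
elim: t => [A a|A l IHl r IHr] /=.
  case=> // -> _; exists [::], [::]; split; first by rewrite cats0.
  by move=> s' Hs' Hr; exists s'; rewrite cats0.
case=> [->|[Hl|Hr]] /and3P[Hb Hvl Hvr].
- exists [::], [::]; split; first by rewrite cats0.
  by move=> s' Hs' Hr; exists s'; rewrite cats0.
- have [pre [suf [E H]]] := IHl Hl Hvl.
  exists pre, (suf ++ pyield r); split; first by rewrite E !catA.
  move=> s' Hs' Hrt; have [l' [Hl' Hrl' El']] := H s' Hs' Hrt.
  exists (PNode A l' r); split => //=; first by rewrite Hrl' Hb Hl' Hvr.
  by rewrite El' !catA.
- have [pre [suf [E H]]] := IHr Hr Hvr.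
  exists (pyield l ++ pre), suf; split; first by rewrite E !catA.
  move=> s' Hs' Hrt; have [r' [Hr' Hrr' Er']] := H s' Hs' Hrt.
  exists (PNode A l r'); split => //=; first by rewrite Hrr' Hb Hr' Hvl.
  by rewrite Er' !catA.
Qed.

Lemma some_node_subtree N T (P : ptree N T -> Prop) t :
  some_node P t -> exists s, subtree s t /\ P s.
Proof.
elim: t => [A a|A l IHl r IHr] /=; first by case=> // H; exists (PLeaf A a); split=> //; left.
case=> [H|[/IHl|/IHr]]; first by exists (PNode A l r); split=> //; left.
  by case=> s [Hs Ps]; exists s; split=> //; right; left.
by case=> s [Hs Ps]; exists s; split=> //; right; right.
Qed.

Lemma all_nodes_intro N T (P : ptree N T -> Prop) t :
  (forall s, subtree s t -> P s) -> all_nodes P t.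
Proof.
elim: t => [A a|A l IHl r IHr] H.
  by split=> //; apply: H; left.
split; first by apply: H; left.
split; [apply: IHl | apply: IHr] => s Hs; apply: H; rewrite /=; right; [left|right]; exact: Hs.
Qed.

Lemma pre_none (S : Type) (a a' : seq S) r r' :
  map Some a ++ None :: r = map Some a' ++ None :: r' -> a = a' /\ r = r'.
Proof.
elim: a a' => [|x a IH] [|x' a'] //=; first by case.
by case=> -> /IH [-> ->].
Qed.

Lemma map_some_inj (S : Type) (a b : seq S) : map Some a = map Some b -> a = b.
Proof. by elim: a b => [|x a IH] [|y b] //= [-> /IH ->]. Qed.

Lemma sharp3_inj (S : Type) (u v w u' v' w' : seq S) :
  sharp3 u v w = sharp3 u' v' w' -> [/\ u = u', v = v' & w = w'].
Proof.
rewrite /sharp3 => /pre_none [-> /pre_none [-> /map_some_inj ->]]; by [].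
Qed.

Lemma split_nil (S : Type) (y : seq S) suf u r :
  map Some y ++ suf = map Some u ++ None :: r ->
  exists q, u = y ++ q /\ suf = map Some q ++ None :: r.
Proof.
elim: y u => [|b y IH] [|a u] //=.
- by move=> ->; exists [::].
- by move=> ->; exists (a :: u).
- by case=> -> /IH [q [-> ->]]; exists q.
Qed.

Lemma split1 (S : Type) pre (y : seq S) suf u r :
  pre ++ map Some y ++ suf = map Some u ++ None :: r ->
  (exists p q, [/\ u = p ++ y ++ q, pre = map Some p & suf = map Some q ++ None :: r]) \/
  (exists pre', pre = map Some u ++ None :: pre' /\ pre' ++ map Some y ++ suf = r).
Proof.
elim: u pre => [|a u IH] [|z pre] /=.
- by move/(split_nil (u:=[::])) => [q [Eu Es]]; left; exists [::], q.
- by case=> -> E; right; exists pre.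
- by move/(split_nil (u:=a::u)) => [q [Eu Es]]; left; exists [::], q.
- case=> -> /IH [[p [q [-> -> ->]]] | [pre' [-> E]]].
    by left; exists (a :: p), q.
  by right; exists pre'.
Qed.

Lemma split_end (S : eqType) pre (y : seq S) suf w :
  pre ++ map Some y ++ suf = map Some w ->
  exists p q, [/\ w = p ++ y ++ q, pre = map Some p & suf = map Some q].
Proof.
move=> E.
have : pre ++ map Some y ++ (suf ++ [:: None]) = map Some w ++ [:: None] by rewrite !catA -E !catA.
case/split1 => [[p [q [Ew Ep Es]]] | [pre' [_ E']]].
  exists p, q; split=> //.
  by move: Es; rewrite !cats1 => /rcons_inj [].
by move: E' => /(congr1 size); rewrite !size_cat /=; lia.
Qed.

Lemma split3 (S : eqType) pre (y : seq S) suf u v w :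
  pre ++ map Some y ++ suf = sharp3 u v w -> exists p q,
  [\/ u = p ++ y ++ q /\ (forall y', pre ++ map Some y' ++ suf = sharp3 (p ++ y' ++ q) v w),
      v = p ++ y ++ q /\ (forall y', pre ++ map Some y' ++ suf = sharp3 u (p ++ y' ++ q) w) |
      w = p ++ y ++ q /\ (forall y', pre ++ map Some y' ++ suf = sharp3 u v (p ++ y' ++ q))].
Proof.
rewrite /sharp3 => /split1 [[p [q [Eu -> ->]]] | [pre' [-> E]]].
  exists p, q; constructor 1; split=> // y'.
  by rewrite !map_cat -!catA.
move: E => /split1 [[p [q [Ev -> ->]]] | [pre'' [-> E]]].
  exists p, q; constructor 2; split=> // y'.
  by rewrite !map_cat /= -!catA /= -?catA.
move: E => /split_end [p [q [Ew -> ->]]].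
exists p, q; constructor 3; split=> // y'.
by rewrite !map_cat /= -!catA /= -?catA /= -?catA.
Qed.

Definition suffix (S : Type) (y w : seq S) := exists p, w = p ++ y.

Lemma suffix_drop (S : Type) (y w : seq S) : suffix y w -> y = drop (size w - size y) w.
Proof. by case=> p ->; rewrite size_cat addnK drop_size_cat. Qed.

Lemma suffix_size (S : Type) (y w : seq S) : suffix y w -> size y <= size w.
Proof. by case=> p ->; rewrite size_cat leq_addl. Qed.

Lemma suffix_sub (S : Type) (y z w : seq S) :
  suffix y w -> suffix z w -> size y <= size z -> suffix y z.
Proof.
move=> Hy Hz Hyz; have Hzw := suffix_size Hz.
have Ey := suffix_drop Hy; have Ez := suffix_drop Hz.
exists (take (size z - size y) z).
rewrite -{1}(cat_take_drop (size z - size y) z); congr (_ ++ _).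
rewrite [in X in drop _ X]Ez drop_drop [RHS]Ey; congr drop; lia.
Qed.

Lemma suffix_trans (S : Type) (x y z : seq S) : suffix x y -> suffix y z -> suffix x z.
Proof. by case=> p -> [q ->]; exists (q ++ p); rewrite catA. Qed.

Lemma suffix_rconsr (S : Type) (y w : seq S) a : suffix y w -> suffix (rcons y a) (rcons w a).
Proof. by case=> p ->; exists p; rewrite rcons_cat. Qed.

Lemma suffix_dropl (S : Type) k (w : seq S) : suffix (drop k w) w.
Proof. by exists (take k w); rewrite cat_take_drop. Qed.

Lemma suffix_rcons (S : Type) (y w : seq S) a : suffix y (rcons w a) ->
  y = [::] \/ exists y0, y = rcons y0 a /\ suffix y0 w.
Proof.
case/lastP: y => [|y0 b]; first by left.
case=> p; rewrite -rcons_cat => /rcons_inj [-> ->]; right; exists y0; split=> //.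
by exists p.
Qed.

Definition hasY (S : Type) (Y : seq S -> Prop) (w : seq S) :=
  exists p y q, w = p ++ y ++ q /\ Y y.

Lemma hasY_rcons (S : Type) (Y : seq S -> Prop) w a :
  hasY Y (rcons w a) <-> hasY Y w \/ exists y, suffix y (rcons w a) /\ Y y.
Proof.
split.
  case=> p [y [q [E Hy]]]; move: E; case/lastP: q => [|q0 b].
    by rewrite cats0 => E; right; exists y; split=> //; exists p.
  rewrite !catA -rcons_cat => /rcons_inj [Ew _]; left.
  by exists p, y, q0; rewrite Ew !catA.
case=> [[p [y [q [-> Hy]]]] | [y [[p E] Hy]]].
  by exists p, y, (rcons q a); rewrite !rcons_cat.
by exists p, y, [::]; rewrite cats0.
Qed.

Lemma gcancel_l G (gs : group_str G) x y z : gmul gs x y = gmul gs x z -> y = z.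
Proof.
move=> E; have : gmul gs (ginv gs x) (gmul gs x y) = gmul gs (ginv gs x) (gmul gs x z) by rewrite E.
by rewrite !gmulA gmulVl !gmul1l.
Qed.

Lemma gcancel_r G (gs : group_str G) x y z : gmul gs y x = gmul gs z x -> y = z.
Proof.
move=> E; have : gmul gs (gmul gs y x) (ginv gs x) = gmul gs (gmul gs z x) (ginv gs x) by rewrite E.
by rewrite -!gmulA gmulVr !gmul1r.
Qed.

Definition pb (P : Prop) : bool := if excluded_middle_informative P then true else false.
Lemma pbP P : reflect P (pb P).
Proof. by rewrite /pb; case: excluded_middle_informative => H; constructor. Qed.

Lemma insub_bseqK n (T : Type) (s : seq T) : size s <= n -> val (insub_bseq n s) = s.
Proof. by move=> H; rewrite /insub_bseq /insubd; case: insubP => [u _ ->|] //=; rewrite H. Qed.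

Definition good_trans (Sigma : finType) (D : dfa Sigma) (Y : seq Sigma -> Prop) (n : nat)
  (st : (dstate D * (bool * n.-bseq Sigma))%type) (a : Sigma) :
  (dstate D * (bool * n.-bseq Sigma))%type :=
  let: (q, (f, win)) := st in
  (dtrans D q a, (f || pb (exists y, suffix y (rcons win a) /\ Y y),
                  insub_bseq n (drop ((size win).+1 - n) (rcons win a)))).

Definition good_dfa (Sigma : finType) (D : dfa Sigma) (Y : seq Sigma -> Prop) (n : nat) : dfa Sigma :=
  @DFA Sigma (dstate D * (bool * n.-bseq Sigma))%type (dstart D, (false, [bseq]))
     (fun st => dfinal D st.1 && ~~ st.2.1) (@good_trans _ D Y n).

Lemma good_inv (Sigma : finType) (D : dfa Sigma) (Y : seq Sigma -> Prop) (n : nat)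
  (HY : forall y, Y y -> size y <= n) (HY0 : ~ Y [::]) w :
  let st := foldl (@good_trans _ D Y n) (dstart D, (false, [bseq])) w in
  [/\ st.1 = foldl (dtrans D) (dstart D) w, (st.2.1 <-> hasY Y w),
      suffix (val st.2.2) w & size st.2.2 = minn n (size w)].
Proof.
elim/last_ind: w => [|w a IH] /=.
  split=> //; last by exists [::].
  split=> // -[p [y [q [E Hy]]]]; exfalso; apply: HY0.
  by move: E => /(congr1 size); rewrite !size_cat /=; case: y Hy => //= ? ? _; lia.
rewrite !foldl_rcons; move: IH.
case: (foldl (@good_trans _ D Y n) _ w) => q [f win] /= [Eq Ef Hs Hsz].
have Hk : size (drop ((size win).+1 - n) (rcons win a)) <= n.
  by rewrite size_drop size_rcons; lia.
split.
- by rewrite Eq.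
- rewrite hasY_rcons; split.
    case/orP => [Hf | /pbP [y [Hy1 Hy2]]]; first by left; apply/Ef.
    right; exists y; split=> //; apply: suffix_trans Hy1 (suffix_rconsr a Hs).
  case=> [/Ef -> // | [y [Hy1 Hy2]]]; apply/orP; right; apply/pbP.
  have H1 := HY _ Hy2; have H2 := suffix_size Hy1.
  exists y; split=> //; apply: suffix_sub Hy1 (suffix_rconsr a Hs) _.
  move: H1 H2; rewrite !size_rcons Hsz; lia.
- rewrite insub_bseqK //; apply: suffix_trans (suffix_dropl _ _) (suffix_rconsr a Hs).
- by rewrite insub_bseqK // size_drop !size_rcons Hsz; lia.
Qed.

Lemma regular_good (Sigma : finType) (D : dfa Sigma) (Y : seq Sigma -> Prop) (n : nat)
  (R : seq Sigma -> Prop) (HD : forall w, R w <-> dfa_accepts D w)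
  (HY : forall y, Y y -> size y <= n) (HY0 : ~ Y [::]) :
  regular (fun w => R w /\ ~ hasY Y w).
Proof.
exists (@good_dfa _ D Y n) => w; rewrite /dfa_accepts /=.
have [E1 E2 _ _] := @good_inv _ D Y n HY HY0 w.
rewrite E1; split.
  case=> /HD; rewrite /dfa_accepts => -> H /=; apply/negP => /E2; exact: H.
case/andP => H1 /negP H2; split; first by apply/HD.
by move=> /E2.
Qed.

Lemma occurs T (g : cnf_grammar T) (L : seq T -> Prop)
  (Huse : productions_useful g L) (Hocc : nonterminals_occur g) (X : nonterm g) :
  exists t x, [/\ derives g (gstart g) t x, L x & exists s, subtree s t /\ proot s = X].
Proof.
case: (Hocc X) => [[A [B [C [Hb HX]]]] | [a Ht]].
  have [t [x [Hd HL Hn]]] := Huse (BinProd A B C) Hb.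
  exists t, x; split=> //.
  have [s [Hs Hr]] := some_node_subtree Hn.
  case: s Hs Hr => [A' a'|A' l r] Hs //= [EA El Er].
  case: HX => [->|[->|->]].
  - by exists (PNode A' l r); split.
  - exists l; split=> //; apply: subtree_trans Hs; rewrite /=; right; left; exact: subtree_refl.
  - exists r; split=> //; apply: subtree_trans Hs; rewrite /=; right; right; exact: subtree_refl.
have [t [x [Hd HL Hn]]] := Huse (TermProd X a) Ht.
exists t, x; split=> //.
have [s [Hs Hr]] := some_node_subtree Hn.
by case: s Hs Hr => [A' a'|A' l r] Hs //= [EA _]; exists (PLeaf A' a'); split.
Qed.

Lemma Yval (G : Type) (gs : group_str G) (Sigma : finType)
  (sinv : Sigma -> Sigma) (phi : seq Sigma -> G)
  (Hgen : choice_of_generators gs sinv phi)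
  (R : seq Sigma -> Prop) (g : cnf_grammar (option Sigma))
  (Hgram : generates g (Mlang gs phi R))
  (Huse : productions_useful g (Mlang gs phi R))
  (Hocc : nonterminals_occur g) B t t' y y' :
  derives g B t (map Some y) -> derives g B t' (map Some y') -> phi y = phi y'.
Proof.
case: Hgen => _ _ Hcat _ _.
move=> [Hv Hr Hy] [Hv' Hr' Hy'].
have [t0 [x0 [[Hv0 Hr0 Hy0] _ [s [Hs Hrs]]]]] := occurs Huse Hocc B.
have [pre [suf [E Hrep]]] := ctx Hs Hv0.
have [t1 [Hv1 Hr1 Ey1]] := Hrep t Hv (etrans Hr (esym Hrs)).
have [t2 [Hv2 Hr2 Ey2]] := Hrep t' Hv' (etrans Hr' (esym Hrs)).
have M1 : Mlang gs phi R (pre ++ map Some y ++ suf).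
  by apply/Hgram; exists t1; split=> //; [rewrite Hr1 | rewrite Ey1 Hy].
have M2 : Mlang gs phi R (pre ++ map Some y' ++ suf).
  by apply/Hgram; exists t2; split=> //; [rewrite Hr2 | rewrite Ey2 Hy'].
case: M1 => u [v [w [E1 _ _ _ H1]]].
case: M2 => u2 [v2 [w2 [E2 _ _ _]]].
have [p [q [[Eu Hf]|[Ev Hf]|[Ew Hf]]]] := split3 E1; rewrite Hf in E2;
  case/sharp3_inj: E2 => Eu2 Ev2 Ew2 H2; rewrite -Eu2 -Ev2 -Ew2 in H2; rewrite -H2 in H1.
- have E3 := gcancel_r (gcancel_r H1); rewrite Eu !Hcat in E3; exact: gcancel_r (gcancel_l E3).
- have E3 := gcancel_l (gcancel_r H1); rewrite Ev !Hcat in E3; exact: gcancel_r (gcancel_l E3).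
- have E3 := gcancel_l H1; rewrite Ew !Hcat in E3; exact: gcancel_r (gcancel_l E3).
Qed.

Definition rep (L : Type) N T (lab : ptree N T -> L) s := exists s3, psub s3 s /\ lab s3 = lab s.
Definition has_rep (L : Type) N T (lab : ptree N T -> L) s := exists s2, subtree s2 s /\ rep lab s2.

Lemma size_bound (L : finType) N T (lab : ptree N T -> L) s anc :
  uniq anc -> (forall s3, subtree s3 s -> lab s3 \notin anc) -> ~ has_rep lab s ->
  size (pyield s) <= 2 ^ (#|L| - size anc).
Proof.
elim: s anc => [A a|A l IHl r IHr] anc Hu Hanc Hnr /=; first by rewrite expn_gt0.
have Hs := Hanc _ (subtree_refl _).
have Hu' : uniq (lab (PNode A l r) :: anc) by rewrite /= Hs Hu.
have Hcard : size (lab (PNode A l r) :: anc) <= #|L|.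
  by have /card_uniqP <- := Hu'; exact: max_card.
have Hch : forall c, (subtree c l \/ subtree c r) ->
   size (pyield c) <= 2 ^ (#|L| - size (lab (PNode A l r) :: anc)) ->
   size (pyield c) <= 2 ^ (#|L| - size (lab (PNode A l r) :: anc)) by [].
have Hsub : forall c, (forall s3, subtree s3 c -> subtree s3 (PNode A l r)) ->
  (forall s3, subtree s3 c -> psub s3 (PNode A l r)) ->
  (forall s3, subtree s3 c -> lab s3 \notin lab (PNode A l r) :: anc) /\ ~ has_rep lab c.
  move=> c H1 H2; split.
    move=> s3 Hs3; rewrite inE negb_or Hanc ?andbT; last exact: H1.
    apply/eqP => E; apply: Hnr; exists (PNode A l r); split; first exact: subtree_refl.
    by exists s3; split=> //; apply: H2.
  by case=> s2 [Hs2 Hr2]; apply: Hnr; exists s2; split=> //; apply: H1.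
have [Hl1 Hl2] : (forall s3, subtree s3 l -> lab s3 \notin lab (PNode A l r) :: anc) /\ ~ has_rep lab l.
  by apply: Hsub => s3 Hs3 //; [rewrite /=; right; left | rewrite /=; left].
have [Hr1 Hr2] : (forall s3, subtree s3 r -> lab s3 \notin lab (PNode A l r) :: anc) /\ ~ has_rep lab r.
  by apply: Hsub => s3 Hs3 //; [rewrite /=; right; right | rewrite /=; right].
have := IHl _ Hu' Hl1 Hl2; have := IHr _ Hu' Hr1 Hr2.
move: Hcard; rewrite size_cat /=.
set k := #|L|; set m := size anc => Hk.
have -> : k - m = (k - m.+1).+1 by lia.
rewrite expnS; lia.
Qed.

Lemma min_rep (L : Type) N T (lab : ptree N T -> L) s : has_rep lab s ->
  exists A l r, [/\ subtree (PNode A l r) s, rep lab (PNode A l r), ~ has_rep lab l & ~ has_rep lab r].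
Proof.
elim: s => [A a|A l IHl r IHr].
  by case=> s2 [[->|[]] [s3 [[] _]]].
move=> Hh.
case: (classic (has_rep lab l)) => [/IHl [A' [l' [r' [H1 H2 H3 H4]]]]|Hl].
  exists A', l', r'; split=> //; apply: subtree_trans H1 _; rewrite /=; right; left; exact: subtree_refl.
case: (classic (has_rep lab r)) => [/IHr [A' [l' [r' [H1 H2 H3 H4]]]]|Hr].
  exists A', l', r'; split=> //; apply: subtree_trans H1 _; rewrite /=; right; right; exact: subtree_refl.
case: Hh => s2 [[E|[H|H]] Hrep].
- by exists A, l, r; split=> //; [exact: subtree_refl | rewrite -E].
- by case: Hl; exists s2.
- by case: Hr; exists s2.
Qed.

Lemma nonone (S : eqType) (x : seq (option S)) : None \notin x -> exists y, x = map Some y.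
Proof.
elim: x => [|[a|] x IH]; first by exists [::].
  by rewrite in_cons negb_or => /andP [_ /IH [y ->]]; exists (a :: y).
by rewrite in_cons eqxx.
Qed.

Definition trO (Sigma : finType) (D : dfa Sigma) (q : dstate D) (o : option Sigma) :=
  if o is Some a then dtrans D q a else q.

Lemma foldl_trO (Sigma : finType) (D : dfa Sigma) q y :
  foldl (@trO _ D) q (map Some y) = foldl (dtrans D) q y.
Proof. by elim: y q => //= a y IH q; rewrite IH. Qed.

Definition lab (Sigma : finType) (g : cnf_grammar (option Sigma)) (D : dfa Sigma)
  (s : ptree (nonterm g) (option Sigma)) : (nonterm g * {ffun dstate D -> dstate D})%type :=
  (proot s, [ffun q => foldl (@trO _ D) q (pyield s)]).

Definition tyeq (Sigma : finType) (D : dfa Sigma) (y y' : seq Sigma) :=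
  forall q, foldl (dtrans D) q y = foldl (dtrans D) q y'.

Definition Yset (Sigma : finType) (g : cnf_grammar (option Sigma)) (D : dfa Sigma) (n : nat)
  (y : seq Sigma) : Prop :=
  size y <= n /\ exists B t y' t', [/\ derives g B t (map Some y), derives g B t' (map Some y'),
                                     size y' < size y & tyeq D y y'].

Definition ncard (Sigma : finType) (g : cnf_grammar (option Sigma)) (D : dfa Sigma) :=
  #|{: (nonterm g * {ffun dstate D -> dstate D})%type}|.

Lemma size_bound0 (Sigma : finType) (g : cnf_grammar (option Sigma)) (D : dfa Sigma) s :
  ~ has_rep (@lab _ g D) s -> size (pyield s) <= 2 ^ ncard g D.
Proof.
move=> Hn; have := @size_bound _ _ _ (@lab _ g D) s [::] isT (fun _ _ => isT) Hn.
by rewrite subn0.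
Qed.

Lemma key (Sigma : finType) (g : cnf_grammar (option Sigma)) (D : dfa Sigma)
  s pre suf (u v w : seq Sigma) :
  pvalid g s -> rank_zero (proot s) -> 2 ^ ncard g D < size (pyield s) ->
  pre ++ pyield s ++ suf = sharp3 u v w ->
  [\/ hasY (Yset g D (2 ^ (ncard g D).+1)) u, hasY (Yset g D (2 ^ (ncard g D).+1)) v
    | hasY (Yset g D (2 ^ (ncard g D).+1)) w].
Proof.
move=> Hv Hrz Hlt E.
have Hh : has_rep (@lab _ g D) s.
  apply: NNPP => Hn.
  by have := size_bound0 Hn; rewrite leqNgt Hlt.
have [A [l [r [Hs2 [s3 [Hps Hlab]] Hl Hr]]]] := min_rep Hh.
have Hbl := size_bound0 Hl.
have Hbr := size_bound0 Hr.
have Hv2 := subtree_valid Hs2 Hv.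
have Hv3 := subtree_valid (psub_subtree Hps) Hv2.
have [pre2 [suf2 E2]] := subtree_factor Hs2.
have [pre3 [suf3 E3]] := subtree_factor (psub_subtree Hps).
have Hnone : None \notin pyield s by apply: (Hrz s); split.
have Hn2 : None \notin pyield (PNode A l r).
  by move: Hnone; rewrite E2 !mem_cat !negb_or => /and3P[].
have Hn3 : None \notin pyield s3.
  by move: Hn2; rewrite E3 !mem_cat !negb_or => /and3P[].
have [y Ey] := nonone Hn2.
have [y' Ey'] := nonone Hn3.
have HY : Yset g D (2 ^ (ncard g D).+1) y.
  split.
    have : size (pyield (PNode A l r)) = size y by rewrite Ey size_map.
    move: Hbl Hbr; rewrite /= size_cat expnS; lia.
  exists (proot (PNode A l r)), (PNode A l r), y', s3; split.
  - by split.
  - by split=> //; case: Hlab.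
  - by have := psub_size Hps; rewrite Ey Ey' !size_map.
  - move=> q; case: Hlab => _ Hf.
    have Ey2 : pyield l ++ pyield r = map Some y := Ey.
    move/ffunP/(_ q): Hf; rewrite !ffunE Ey2 Ey' !foldl_trO.
    by move=> ->.
have E' : (pre ++ pre2) ++ map Some y ++ (suf2 ++ suf) = sharp3 u v w.
  by rewrite -E E2 -Ey !catA.
have [p [q [[Eu _]|[Ev _]|[Ew _]]]] := split3 E'; [constructor 1|constructor 2|constructor 3];
  by exists p, y, q.
Qed.

Theorem lemma5p1 (G : Type) (gs : group_str G) (Sigma : finType)
  (sinv : Sigma -> Sigma) (phi : seq Sigma -> G)
  (Hgen : choice_of_generators gs sinv phi)
  (R : seq Sigma -> Prop) (HR : regular_combing phi R)
  (g : cnf_grammar (option Sigma))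
  (Hgram : generates g (Mlang gs phi R))
  (Huse : productions_useful g (Mlang gs phi R))
  (Hocc : nonterminals_occur g) :
  exists (K' : nat) (R' : seq Sigma -> Prop),
    [/\ regular_combing phi R', (forall w, R' w -> R w) &
        forall x, Mlang gs phi R x -> concat3 R' x ->
          exists t, derives g (gstart g) t x /\
            all_nodes (fun s => rank_zero (proot s) -> size (pyield s) <= K') t].
Proof.
case: (HR) => [[D HD] Hsurj].
set Y := Yset g D (2 ^ (ncard g D).+1).
have HY : forall y, Y y -> size y <= 2 ^ (ncard g D).+1 by move=> y [].
have HY0 : ~ Y [::] by case=> _ [B [t [y' [t' [_ _ H _]]]]].
exists (2 ^ ncard g D), (fun w => R w /\ ~ hasY Y w); split.
- split; first exact: regular_good HD HY HY0.
  have Hcat : forall w v, phi (w ++ v) = gmul gs (phi w) (phi v) by case: Hgen.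
  have surj : forall n u, size u < n -> R u -> exists u', (R u' /\ ~ hasY Y u') /\ phi u' = phi u.
    elim=> // n IH u Hu Ru.
    case: (classic (hasY Y u)) => [[p [y [q [Eu [_ [B [t [y' [t' [Hd Hd' Hlt Hty]]]]]]]]]] | Hn];
      last by exists u.
    have Ru' : R (p ++ y' ++ q).
      move/HD: Ru; rewrite Eu /dfa_accepts !foldl_cat Hty => H; apply/HD.
      by rewrite /dfa_accepts !foldl_cat.
    have Hph : phi (p ++ y' ++ q) = phi u.
      by rewrite Eu !Hcat (Yval Hgen Hgram Huse Hocc Hd Hd').
    have [|u'' [H1 H2]] := IH (p ++ y' ++ q) _ Ru'.
      by move: Hu; rewrite Eu !size_cat; lia.
    by exists u''; rewrite H2 Hph.
  move=> g0; have [u [Ru <-]] := Hsurj g0.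
  exact: (surj (size u).+1 u (ltnSn _) Ru).
- by move=> w [].
- move=> x Hx [u [v [w [Ex [Ru Gu] [Rv Gv] [Rw Gw]]]]].
  have [t [Hv Hr Hy]] := (Hgram x).1 Hx.
  exists t; split=> //.
  apply: all_nodes_intro => s Hs Hrz.
  rewrite leqNgt; apply/negP => Hlt.
  have [pre [suf [E _]]] := ctx Hs Hv.
  have Hvs := subtree_valid Hs Hv.
  have E' : pre ++ pyield s ++ suf = sharp3 u v w by rewrite -E Hy.
  by case: (key Hvs Hrz Hlt E').
Qed.
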